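(* Fix integers $n\ge 1$ and $N\ge 1$, tumor parameters $\alpha_0,\beta_0>0$, a constant $\tau(N)\in\mathbb{R}$, and for each $m\in\{1,\dots,n\}$ numbers $D_m>0$, integers $N_m\ge 1$, and $0<\rho_m^{\min}\le\rho_m^{\max}<\infty$. Index the organs so that $D_1^2/N_1\le D_2^2/N_2\le\cdots\le D_n^2/N_n$. Consider the robust problem $$\text{(RFRAC(N))}\quad f^*(N)=\max_{\vec d\in\mathbb{R}^N}\ \alpha_0\sum_{t=1}^N d_t+\beta_0\sum_{t=1}^N d_t^2-\tau(N)$$ subject to $\vec d\ge 0$ and, for every $m\in\{1,\dots,n\}$ and every $\tilde\rho_m\in[\rho_m^{\min},\rho_m^{\max}]$, $$\sum_{t=1}^N d_t+\tilde\rho_m\Big(\sum_{t=1}^N d_t^2-\frac{D_m^2}{N_m}\Big)\le D_m .$$ For $k\in\{0,1,\dots,n\}$, with $\mathrm{RC}^+_m=D_m+\rho_m^{\max}D_m^2/N_m$ and $\mathrm{RC}^-_m=D_m+\rho_m^{\min}D_m^2/N_m$, define the subproblem $$\text{(kSub(N))}\quad f^*(N;k)=\max_{\vec d\in\mathbb{R}^N}\ \alpha_0\sum_{t=1}^N d_t+\beta_0\sum_{t=1}^N d_t^2-\tau(N)$$ subject to $\vec d\ge 0$; $\sum_t d_t+\rho_m^{\max}\sum_t d_t^2\le \mathrm{RC}^+_m$ for $m=1,\dots,k$; $\sum_t d_t+\rho_m^{\min}\sum_t d_t^2\le \mathrm{RC}^-_m$ for $m=k+1,\dots,n$; $\sum_t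 d_t^2\ge D_k^2/N_k$ if $k\ne 0$; and $\sum_t d_t^2\le D_{k+1}^2/N_{k+1}$ if $k\ne n$. Then (RFRAC(N)) can be solved by solving the $n+1$ subproblems (kSub(N)), $k=0,\dots,n$, and picking a solution with the largest objective value: that is, $f^*(N)=\max\{f^*(N;k): k\in\{0,\dots,n\},\ \text{(kSub(N)) feasible}\}$, and an optimal solution of a subproblem attaining this maximum is optimal for (RFRAC(N)).
   Context: This is the robust counterpart (for a fixed number $N$ of treatment fractions) of the linear-quadratic fractionation problem in radiotherapy: $\vec d=(d_1,\dots,d_N)$ are the doses per fraction, the objective is the tumor biological effect with proliferation correction $\tau(N)$ (a constant once $N$ is fixed), and for each organ-at-risk $m$ the unknown parameter $\tilde\rho_m=\beta_m/\alpha_m$ lies in the known interval $[\rho_m^{\min},\rho_m^{\max}]$; $D_m$ is a tolerance dose delivered conventionally in $N_m$ equal fractions. Terms whose index condition is vacuous (e.g. the constraints for $m=1,\dots,k$ when $k=0$) are omitted. *)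

(* Defs.v *)
From HB Require Import structures.
From mathcomp Require Import all_boot all_order all_algebra.
From mathcomp Require Import boolp classical_sets reals.
Set Implicit Arguments. Unset Strict Implicit. Unset Printing Implicit Defensive.
Import Order.TTheory GRing.Theory Num.Theory.
Local Open Scope ring_scope.
Local Open Scope classical_set_scope.

(* Dose vectors d = (d_1,...,d_N) are functions 'I_N -> R (index t-1). *)
Section Frac.
Variable R : realType.

Definition sum1 (N : nat) (d : 'I_N -> R) : R := \sum_(t < N) d t.
Definition sum2 (N : nat) (d : 'I_N -> R) : R := \sum_(t < N) d t ^+ 2.

Definition frac_obj (N : nat) (alpha0 beta0 tauN : R) (d : 'I_N -> R) : R :=
  alpha0 * sum1 d + beta0 * sum2 d - tauN.

Definition nonneg_vec (N : nat) (d : 'I_N -> R) : Prop := forall t, 0 <= d t.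

(* Organs are indexed m = 1..n (as in the paper); data given as functions on nat. *)
Definition thr (D : nat -> R) (Nm : nat -> nat) (m : nat) : R :=
  D m ^+ 2 / (Nm m)%:R.

Definition rfrac_feasible (N n : nat) (D : nat -> R) (Nm : nat -> nat)
  (rhomin rhomax : nat -> R) (d : 'I_N -> R) : Prop :=
  nonneg_vec d /\
  forall m : nat, (1 <= m <= n)%N ->
    forall rho : R, rhomin m <= rho <= rhomax m ->
      sum1 d + rho * (sum2 d - thr D Nm m) <= D m.

Definition ksub_feasible (N n : nat) (D : nat -> R) (Nm : nat -> nat)
  (rhomin rhomax : nat -> R) (k : nat) (d : 'I_N -> R) : Prop :=
  [/\ nonneg_vec d,
      (forall m : nat, (1 <= m <= k)%N ->
         sum1 d + rhomax m * sum2 d <= D m + rhomax m * thr D Nm m),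
      (forall m : nat, (k + 1 <= m <= n)%N ->
         sum1 d + rhomin m * sum2 d <= D m + rhomin m * thr D Nm m),
      (k != 0%N -> thr D Nm k <= sum2 d) &
      (k != n -> sum2 d <= thr D Nm k.+1)].

Definition opt_value (N : nat) (obj : ('I_N -> R) -> R) (F : set ('I_N -> R)) : R :=
  sup [set obj d | d in F].

Definition is_optimal (N : nat) (obj : ('I_N -> R) -> R) (F : set ('I_N -> R))
  (d : 'I_N -> R) : Prop :=
  F d /\ forall d', F d' -> obj d' <= obj d.

End Frac.

(* Main.v *)
Require Import Defs.
From HB Require Import structures.
From mathcomp Require Import all_boot all_order all_algebra.
From mathcomp Require Import boolp classical_sets reals.
From mathcomp Require Import lra zify.
Import Order.TTheory GRing.Theory Num.Theory.
Local Open Scope ring_scope.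
Local Open Scope classical_set_scope.

Lemma last_true (P : pred nat) (n : nat) : P 0%N ->
  exists k, [/\ (k <= n)%N, P k & forall j, (k < j <= n)%N -> ~~ P j].
Proof.
move=> P0; elim: n => [|n [k [kn Pk Hk]]].
  exists 0%N; split => // j /andP[a b]; exfalso; lia.
case: (boolP (P n.+1)) => Pn.
  exists n.+1; split => // j /andP[a b]; exfalso; lia.
exists k; split => //; first lia.
move=> j /andP[a b]; case: (ltngtP j n.+1) => h.
- apply: Hk; apply/andP; split => //; lia.
- exfalso; lia.
- by rewrite h.
Qed.

Lemma best_index (R : realType) (P : nat -> Prop) (v : nat -> R) (j : nat) :
  (exists2 k, (k <= j)%N & P k) ->
  exists k, [/\ (k <= j)%N, P k & forall k', (k' <= j)%N -> P k' -> v k' <= v k].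
Proof.
elim: j => [|j IH] [k kj Pk].
  have k0 : k = 0%N by lia.
  subst k; exists 0%N; split => // k' k'0 _.
  by have -> : k' = 0%N by lia.
case: (pselect (exists2 k, (k <= j)%N & P k)) => [ex|nex].
  have [k1 [k1j Pk1 H1]] := IH ex.
  case: (pselect (P j.+1)) => [Pj|nPj].
    case: (leP (v j.+1) (v k1)) => h.
      exists k1; split => //; first lia.
      move=> k' k'j Pk'; case: (ltngtP k' j.+1) => e.
      - by apply: H1 => //; lia.
      - exfalso; lia.
      - by rewrite e.
    exists j.+1; split => // k' k'j Pk'; case: (ltngtP k' j.+1) => e.
    - apply: le_trans (H1 k' _ Pk') (ltW h); lia.
    - exfalso; lia.
    - by rewrite e.
  exists k1; split => //; first lia.
  move=> k' k'j Pk'; case: (ltngtP k' j.+1) => e.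
  - by apply: H1 => //; lia.
  - exfalso; lia.
  - by subst k'.
exists j.+1; split => //.
  case: (ltngtP k j.+1) => e.
  - exfalso; apply: nex; exists k => //; lia.
  - exfalso; lia.
  - by subst k.
move=> k' k'j Pk'; case: (ltngtP k' j.+1) => e.
- exfalso; apply: nex; exists k' => //; lia.
- exfalso; lia.
- by subst k'.
Qed.

Theorem mainTheorem1 (R : realType) (n N : nat) (alpha0 beta0 tauN : R)
  (D : nat -> R) (Nm : nat -> nat) (rhomin rhomax : nat -> R) :
  (1 <= n)%N -> (1 <= N)%N -> 0 < alpha0 -> 0 < beta0 ->
  (forall m, (1 <= m <= n)%N ->
     [/\ 0 < D m, (1 <= Nm m)%N, 0 < rhomin m & rhomin m <= rhomax m]) ->
  (forall m, (1 <= m < n)%N -> thr D Nm m <= thr D Nm m.+1) ->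
  let obj := frac_obj alpha0 beta0 tauN in
  let F := rfrac_feasible (N:=N) n D Nm rhomin rhomax in
  let Fk := fun k => ksub_feasible (N:=N) n D Nm rhomin rhomax k in
  (* f*(N) = max { f*(N;k) : 0 <= k <= n, (kSub(N)) feasible } *)
  ((exists2 k, (k <= n)%N & Fk k !=set0 /\ opt_value obj F = opt_value obj (Fk k)) /\
   (forall k, (k <= n)%N -> Fk k !=set0 -> opt_value obj (Fk k) <= opt_value obj F)) /\
  (* an optimal solution of a subproblem attaining this maximum is optimal for RFRAC(N) *)
  (forall k d, (k <= n)%N -> is_optimal obj (Fk k) d ->
     (forall k', (k' <= n)%N -> Fk k' !=set0 -> opt_value obj (Fk k') <= obj d) ->
     is_optimal obj F d).
Proof.
move=> n1 N1 a0 b0 Hm Hsort obj F Fk.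
set T := thr D Nm.
have Tge0 : forall m, (1 <= m <= n)%N -> 0 <= T m.
  move=> m hm; have [_ hN _ _] := Hm m hm.
  by rewrite /T /thr divr_ge0 ?sqr_ge0 ?ler0n.
have mono : forall a i, (1 <= a)%N -> (a + i <= n)%N -> T a <= T (a + i)%N.
  move=> a i a1; elim: i => [|i IH] h; first by rewrite addn0.
  apply: le_trans (IH _) _; first lia.
  rewrite addnS; apply: Hsort; lia.
have monoT : forall a b, (1 <= a)%N -> (a <= b)%N -> (b <= n)%N -> T a <= T b.
  move=> a b a1 ab bn; have -> : b = (a + (b - a))%N by lia.
  apply: mono => //; lia.
have s1ge0 : forall d : 'I_N -> R, nonneg_vec d -> 0 <= sum1 d.
  by move=> d nd; rewrite /sum1 sumr_ge0.
have s2ge0 : forall d : 'I_N -> R, 0 <= sum2 d.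
  by move=> d; rewrite /sum2 sumr_ge0 // => i _; rewrite sqr_ge0.
have sub : forall k, (k <= n)%N -> forall d, Fk k d -> F d.
  move=> k kn d [nd Hle Hgt Hk0 Hkn]; split => // m /andP[m1 mn] rho /andP[r1 r2].
  have hm : (1 <= m <= n)%N by rewrite m1 mn.
  have [_ _ rp rr] := Hm m hm.
  case: (leqP m k) => mk.
    have k0 : k != 0%N by rewrite -lt0n; lia.
    have h1 := Hk0 k0.
    have h2 : T m <= T k by apply: monoT.
    have h3 := Hle m (introT andP (conj m1 mk)).
    have h4 : 0 <= (rhomax m - rho) * (sum2 d - T m).
      by apply: mulr_ge0; rewrite subr_ge0 //; apply: le_trans h2 h1.
    rewrite /T in h1 h2 h3 h4 *; nra.
  have kn' : k != n by rewrite neq_ltn; apply/orP; left; lia.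
  have h1 := Hkn kn'.
  have h2 : T k.+1 <= T m by apply: monoT; lia.
  have mk1 : (k + 1 <= m)%N by rewrite addn1.
  have h3 := Hgt m (introT andP (conj mk1 mn)).
  have h4 : 0 <= (rho - rhomin m) * (T m - sum2 d).
    by apply: mulr_ge0; rewrite subr_ge0 //; apply: le_trans h1 h2.
  rewrite /T in h1 h2 h3 h4 *; nra.
have cover : forall d, F d -> exists2 k, (k <= n)%N & Fk k d.
  move=> d [nd Hr].
  have [k [kn Pk Hk]] := last_true (fun k => (k == 0%N) || (T k <= sum2 d)) n isT.
  exists k => //; split => //.
  - move=> m /andP[m1 mk].
    have hm : (1 <= m <= n)%N by rewrite m1 /=; lia.
    have [_ _ rp rr] := Hm m hm.
    have := Hr m hm (rhomax m); rewrite rr lexx => /(_ isT).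
    rewrite /T; lra.
  - move=> m /andP[m1 mn].
    have hm : (1 <= m <= n)%N by apply/andP; split => //; lia.
    have [_ _ rp rr] := Hm m hm.
    have := Hr m hm (rhomin m); rewrite rr lexx => /(_ isT).
    rewrite /T; lra.
  - by move=> k0; move: Pk; rewrite (negbTE k0).
  - move=> kn'; have := Hk k.+1; rewrite ltnSn /= => /(_ _) H.
    have : (k < n)%N by rewrite ltn_neqAle kn' kn.
    move=> /H; rewrite /= -/T => h; apply: ltW; rewrite ltNge; exact: h.
have F0 : F (fun _ => 0).
  split; first by move=> t.
  move=> m hm rho /andP[r1 r2].
  have [Dp _ rp rr] := Hm m hm.
  have T0 := Tge0 m hm.
  have -> : sum1 (fun _ : 'I_N => (0:R)) = 0 by rewrite /sum1 big1.
  have -> : sum2 (fun _ : 'I_N => (0:R)) = 0 by rewrite /sum2 big1 // => i _; rewrite expr0n.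
  rewrite -/T; nra.
have h11 : (1 <= 1 <= n)%N by rewrite n1.
have [D1p _ r1p rr1] := Hm 1%N h11.
have T1 := Tge0 1%N h11.
set ub := alpha0 * (D 1%N + rhomin 1%N * T 1%N) + beta0 * (D 1%N / rhomin 1%N + T 1%N) - tauN.
have bound : forall d, F d -> obj d <= ub.
  move=> d [nd Hr].
  have := Hr 1%N h11 (rhomin 1%N); rewrite lexx rr1 => /(_ isT) H.
  have s1p := s1ge0 d nd; have s2p := s2ge0 d.
  set x := D 1%N / rhomin 1%N.
  have hx : rhomin 1%N * x = D 1%N by rewrite /x mulrC divfK // gt_eqF.
  have b1 : sum1 d <= D 1%N + rhomin 1%N * T 1%N by rewrite /T; nra.
  have b2 : sum2 d <= x + T 1%N.
    have h : rhomin 1%N * (sum2 d - (x + T 1%N)) <= 0.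
      rewrite mulrBr mulrDr hx; rewrite /T in H *; lra.
    by rewrite pmulr_rle0 // subr_le0 in h.
  have e1 := ler_wpM2l (ltW a0) b1; have e2 := ler_wpM2l (ltW b0) b2.
  rewrite /obj /frac_obj /ub -/x; lra.
have hub : forall G, G `<=` F -> has_ubound [set obj d | d in G].
  move=> G GF; exists ub => y [d Gd <-]; exact: bound (GF _ Gd).
have le_sup_k : forall G, G `<=` F -> forall d, G d -> obj d <= sup [set obj d | d in G].
  move=> G GF d Gd; apply: (ub_le_sup (hub G GF)); by exists d.
have subk_le : forall k, (k <= n)%N -> Fk k !=set0 -> opt_value obj (Fk k) <= opt_value obj F.
  move=> k kn [d0 h0]; apply: ge_sup; first by exists (obj d0), d0.
  move=> y [d Fd <-]; apply: (le_sup_k F) => //; exact: sub k kn d Fd.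
split; first split => //.
  have [k0 k0n Fk0] := cover _ F0.
  have [k [kn Pk Hk]] := @best_index R (fun k => Fk k !=set0) (fun k => opt_value obj (Fk k)) n
    (ex_intro2 _ _ k0 k0n (ex_intro _ _ Fk0)).
  exists k => //; split => //; apply/eqP; rewrite eq_le subk_le // andbT.
  apply: ge_sup; first by exists (obj (fun _ => 0)), (fun _ => 0).
  move=> y [d Fd <-]; have [k' k'n Fk'd] := cover d Fd.
  apply: le_trans (Hk k' k'n (ex_intro _ _ Fk'd)).
  exact: (le_sup_k (Fk k') (sub k' k'n)).
move=> k d kn [Fkd Hopt] Hmax; split; first exact: sub k kn d Fkd.
move=> d' Fd'; have [k' k'n Fk'd] := cover d' Fd'.
apply: le_trans (Hmax k' k'n (ex_intro _ _ Fk'd)).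
exact: (le_sup_k (Fk k') (sub k' k'n)).
Qed.
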